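(* Let $F$ be a field, $\{E_1,\ldots,E_t\}$ a complete symmetric orthogonal set of idempotents in $F_{n\times n}$, and $\mathbf{z}=(z_1,\ldots,z_k)$ commuting variables. For $i=1,\ldots,t$ let $w_i(\mathbf{z})=\alpha_i\prod_{j=1}^kz_j^{t_{i,j}}$ with non-negative integers $t_{i,j}$ and $\alpha_i\in F$ satisfying $|\alpha_i|^2=1$. Then $W(\mathbf{z})=\sum_{i=1}^tw_i(\mathbf{z})E_i$ is a paraunitary matrix, i.e. $W(\mathbf{z})W^*(\mathbf{z}^{-1})=1$.
   Context: For $a\in\mathbb{C}$, $a^*=\overline a$; for other fields $a^*=a$; $|a|^2=aa^*$. For matrices, $^*$ is conjugate transpose over $\mathbb{C}$ and transpose otherwise; $W^*(\mathbf{z}^{-1})$ applies $^*$ to coefficients and replaces each $z_j$ by $z_j^{-1}$. A complete symmetric orthogonal set of idempotents is $\{E_1,\ldots,E_t\}$ with $E_i\ne 0$, $E_i^2=E_i$, $E_iE_j=0$ ($i\ne j$), $\sum_iE_i=I_n$ and $E_i^*=E_i$. *)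

(* Defs.v *)
From HB Require Import structures.
From mathcomp Require Import all_boot all_order all_algebra.
From mathcomp Require Import complex.
From mathcomp Require Import reals.
Set Implicit Arguments. Unset Strict Implicit. Unset Printing Implicit Defensive.
Import Order.TTheory GRing.Theory Num.Theory.
Local Open Scope ring_scope.

(* Matrix Laurent polynomials in k commuting variables z = (z_1,...,z_k)
   with coefficients in 'M[F]_n, represented as finite formal sums
   sum_m  c_m * z^(e_m)  given by a list of terms (e_m, c_m), where the
   exponent e_m : 'rV[int]_k may have negative entries. *)
Section Laurent.
Variables (F : fieldType) (k n : nat).

Definition lterm := ('rV[int]_k * 'M[F]_n)%type.
Definition lpoly := seq lterm.

Definition lcoef (P : lpoly) (e : 'rV[int]_k) : 'M[F]_n :=
  \sum_(x <- P | x.1 == e) x.2.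

Definition lpeq (P Q : lpoly) : Prop := forall e, lcoef P e = lcoef Q e.

Definition lpmul (P Q : lpoly) : lpoly :=
  [seq (x.1 + y.1, x.2 *m y.2) | x <- P, y <- Q].

Definition lpone : lpoly := [:: (0, 1%:M)].

Definition lpsum (m : nat) (a : 'I_m -> F) (e : 'I_m -> 'rV[int]_k)
  (A : 'I_m -> 'M[F]_n) : lpoly :=
  [seq (e i, a i *: A i) | i <- enum 'I_m].

Definition nexp (t : 'I_k -> nat) : 'rV[int]_k := \row_j (t j)%:Z.

Variable star : F -> F.

Definition mxstar (A : 'M[F]_n) : 'M[F]_n := (map_mx star A)^T.

(* W^*(z^{-1}) : apply ^* to the coefficients and replace z_j by z_j^{-1} *)
Definition lpstar_inv (P : lpoly) : lpoly :=
  [seq (- x.1, mxstar x.2) | x <- P].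

Definition paraunitary (W : lpoly) : Prop :=
  lpeq (lpmul W (lpstar_inv W)) lpone.

Definition csos (t : nat) (E : 'I_t -> 'M[F]_n) : Prop :=
  [/\ forall i, E i != 0,
      forall i, E i *m E i = E i,
      forall i j, i != j -> E i *m E j = 0,
      \sum_(i < t) E i = 1%:M
    & forall i, mxstar (E i) = E i].

End Laurent.

(* Main.v *)
Require Import Defs.
From HB Require Import structures.
From mathcomp Require Import all_boot all_order all_algebra.
From mathcomp Require Import complex.
From mathcomp Require Import reals.
Import Order.TTheory GRing.Theory Num.Theory.
Local Open Scope ring_scope.

Lemma gen_para (F : fieldType) (star : F -> F) (n t k : nat)
  (E : 'I_t -> 'M[F]_n) (alpha : 'I_t -> F) (e : 'I_t -> 'rV[int]_k) :
  (forall a (A : 'M[F]_n), mxstar star (a *: A) = star a *: mxstar star A) ->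
  csos star E ->
  (forall i, alpha i * star (alpha i) = 1) ->
  paraunitary star (lpsum alpha e E).
Proof.
move=> hZ [_ hid horth hsum hst] ha f.
rewrite /lcoef /lpmul /lpstar_inv /lpone /lpsum.
rewrite big_mkcond big_allpairs_dep /= big_map big_enum /=.
rewrite big_mkcond big_cons big_nil /= addr0.
under eq_bigr => i _ do rewrite big_map big_map big_enum /=.
rewrite (eq_bigr (fun i => if e i - e i == f then E i else 0)); last first.
  move=> i _; rewrite (bigD1 i) //= big1 ?addr0.
    by case: ifP => // _; rewrite hZ hst -scalemxAl -scalemxAr hid scalerA ha scale1r.
  move=> j hji; rewrite hZ hst -scalemxAl -scalemxAr horth 1?eq_sym //.
  by rewrite !scaler0; case: ifP.
case: eqP => [<-|hf].
  by rewrite -hsum; apply: eq_bigr => i _; rewrite addrN eqxx.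
by apply: big1 => i _; rewrite addrN; case: eqP.
Qed.

Theorem proposition14 :
  (forall (F : fieldType) (n t k : nat) (E : 'I_t -> 'M[F]_n)
     (alpha : 'I_t -> F) (tt : 'I_t -> 'I_k -> nat),
     csos id E ->
     (forall i, alpha i * alpha i = 1) ->
     paraunitary id (lpsum alpha (fun i => nexp (tt i)) E))
  /\
  (forall (R : realType) (n t k : nat) (E : 'I_t -> 'M[R[i]]_n)
     (alpha : 'I_t -> R[i]) (tt : 'I_t -> 'I_k -> nat),
     csos Num.conj E ->
     (forall i, alpha i * Num.conj (alpha i) = 1) ->
     paraunitary Num.conj (lpsum alpha (fun i => nexp (tt i)) E)).
Proof.
split=> * ; apply: gen_para; try assumption.
  by move=> a A; apply/matrixP => i j; rewrite !mxE.
by move=> a A; apply/matrixP => i j; by rewrite !mxE rmorphM.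
Qed.
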